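(* Let $P$ be a product rule. The $P$-product $*$ on $\mathbb Q\langle\langle\Sigma\rangle\rangle$ is bilinear, associative and commutative (BAC) if and only if $P$ is special, i.e. if and only if the following identities hold (where $\approx$ is term equivalence): \[ P(x+y,\dot x+\dot y,z,\dot z)\approx P(x,\dot x,z,\dot z)+P(y,\dot y,z,\dot z),\] \[ P(x,\dot x,\,y*z,\,P(y,\dot y,z,\dot z))\approx P(x*y,\,P(x,\dot x,y,\dot y),\,z,\dot z),\] \[ P(x,\dot x,y,\dot y)\approx P(y,\dot y,x,\dot x).\]
   Context: Let $\Sigma$ be a finite alphabet, $\Sigma^*$ the set of finite words with empty word $\varepsilon$. A series is a function $f:\Sigma^*\to\mathbb Q$; write $f_w=f(w)$; the set of series $\mathbb Q\langle\langle\Sigma\rangle\rangle$ is a $\mathbb Q$-vector space under pointwise scalar multiplication and addition, with zero series $\mathbb 0$. For $a\in\Sigma$ the left derivative $\delta_a f$ is the series $w\mapsto f(aw)$. Terms: for a set $X$ of variables, $\mathrm{Terms}(X)$ is the set of syntactic terms generated by $u,v::=x\mid 0\mid c\cdot u\mid u+v\mid u*v$ ($x\in X$, $c\in\mathbb Q$), with no identities imposed. A product rule is a term $P\in\mathrm{Terms}(\{x,\dot x,y,\dot y\})$; $P(s_1,s_2,s_3,s_4)$ denotes simultaneous substitution of $s_1,\dots,s_4$ for $x,\dot x,y,\dot y$. $P$-product: given a product rule $P$, the $P$-product $*$ on series and the semantics $[\![u]\!]_\varrho\in\mathbb Q\langle\langle\Sigma\rangle\rangle$ of terms $u$ under valuations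 $\varrho:X\to\mathbb Q\langle\langle\Sigma\rangle\rangle$ are the unique pair satisfying: $(f*g)_\varepsilon=f_\varepsilon g_\varepsilon$ and $\delta_a(f*g)=[\![P]\!]_{[x\mapsto f,\dot x\mapsto\delta_af,y\mapsto g,\dot y\mapsto\delta_ag]}$ for all $a\in\Sigma$ and series $f,g$; and $[\![0]\!]_\varrho=\mathbb 0$, $[\![x]\!]_\varrho=\varrho(x)$, $[\![c\cdot u]\!]_\varrho=c\cdot[\![u]\!]_\varrho$, $[\![u+v]\!]_\varrho=[\![u]\!]_\varrho+[\![v]\!]_\varrho$, $[\![u*v]\!]_\varrho=[\![u]\!]_\varrho*[\![v]\!]_\varrho$. BAC: the product is BAC if for all series $f,g,h$ and $c\in\mathbb Q$: $(f+g)*h=f*h+g*h$, $(c\cdot f)*g=c\cdot(f*g)$, $f*(g*h)=(f*g)*h$, $f*g=g*f$. Term equivalence: $u\approx v$ iff $u$ and $v$ denote the same polynomial of the commutative polynomial ring $\mathbb Q[X]$ when $0,c\cdot,+,*$ are read as the zero polynomial, scalar multiplication, addition and multiplication of polynomials (equivalently, $\approx$ is the smallest congruence on terms generated by the axioms of commutative, not necessarily unital, $\mathbb Q$-algebras). *)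

(* Defs.v *)
From HB Require Import structures.
From mathcomp Require Import all_boot all_order all_algebra.
From mathcomp Require Import mpoly.
Set Implicit Arguments. Unset Strict Implicit. Unset Printing Implicit Defensive.
Import Order.TTheory GRing.Theory Num.Theory.
Local Open Scope ring_scope.

Definition word (S : finType) := seq S.
Definition series (S : finType) := seq S -> rat.

Definition szero (S : finType) : series S := fun _ => 0.
Definition sadd (S : finType) (f g : series S) : series S := fun w => f w + g w.
Definition sscale (S : finType) (c : rat) (f : series S) : series S := fun w => c * f w.
Definition sderiv (S : finType) (a : S) (f : series S) : series S := fun w => f (a :: w).

Inductive term (X : Type) : Type :=
| TVar of X
| TZero
| TScale of rat & term X
| TAdd of term X & term X
| TMul of term X & term X.
Arguments TZero {X}.

Fixpoint tsubst (X Y : Type) (s : X -> term Y) (u : term X) : term Y :=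
  match u with
  | TVar x => s x
  | TZero => TZero
  | TScale c u => TScale c (tsubst s u)
  | TAdd u v => TAdd (tsubst s u) (tsubst s v)
  | TMul u v => TMul (tsubst s u) (tsubst s v)
  end.

(* A product rule is a term in the four variables x, x', y, y',
   encoded as 'I_4 with 0 = x, 1 = xdot, 2 = y, 3 = ydot. *)
Definition prod_rule := term 'I_4.

Definition subst4 (Y : Type) (s1 s2 s3 s4 : term Y) : 'I_4 -> term Y :=
  fun i => match nat_of_ord i with 0 => s1 | 1 => s2 | 2 => s3 | _ => s4 end.
Definition papp (Y : Type) (P : prod_rule) (s1 s2 s3 s4 : term Y) : term Y :=
  tsubst (subst4 s1 s2 s3 s4) P.

Fixpoint tsem (S : finType) (X : Type) (m : series S -> series S -> series S)
    (rho : X -> series S) (u : term X) : series S :=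
  match u with
  | TVar x => rho x
  | TZero => @szero S
  | TScale c u => sscale c (tsem m rho u)
  | TAdd u v => sadd (tsem m rho u) (tsem m rho v)
  | TMul u v => m (tsem m rho u) (tsem m rho v)
  end.

Definition pval (S : finType) (f g : series S) (a : S) : 'I_4 -> series S :=
  fun i => match nat_of_ord i with
           | 0 => f | 1 => sderiv a f | 2 => g | _ => sderiv a g end.

(* ---------- The P-product ----------
   pprod_approx P n is correct on all words of length < n; the P-product
   (f*g)(w) is read off at n = size w + 1.  This is the unique solution of
     (f*g)_eps = f_eps g_eps,
     delta_a (f*g) = [[P]]_[x|->f, xdot|->delta_a f, y|->g, ydot|->delta_a g]
   (recursion on the length of the word). *)
Fixpoint pprod_approx (S : finType) (P : prod_rule) (n : nat)
    : series S -> series S -> series S :=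
  match n with
  | 0 => fun _ _ _ => 0
  | n'.+1 => fun f g w =>
      match w with
      | [::] => f [::] * g [::]
      | a :: w' => tsem (pprod_approx P n') (pval f g a) P w'
      end
  end.

Definition pprod (S : finType) (P : prod_rule) (f g : series S) : series S :=
  fun w => pprod_approx P (size w).+1 f g w.

Definition is_P_product (S : finType) (P : prod_rule)
    (m : series S -> series S -> series S) : Prop :=
  (forall f g, m f g [::] = f [::] * g [::]) /\
  (forall a f g, sderiv a (m f g) = tsem m (pval f g a) P).

Definition BAC (S : finType) (m : series S -> series S -> series S) : Prop :=
  (forall f g h, m (sadd f g) h = sadd (m f h) (m g h)) /\
  (forall (c : rat) f g, m (sscale c f) g = sscale c (m f g)) /\
  (forall f g h, m f (m g h) = m (m f g) h) /\
  (forall f g, m f g = m g f).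

Fixpoint tpoly (n : nat) (u : term 'I_n) : {mpoly rat[n]} :=
  match u with
  | TVar i => 'X_i
  | TZero => 0
  | TScale c u => c *: tpoly u
  | TAdd u v => tpoly u + tpoly v
  | TMul u v => tpoly u * tpoly v
  end.

Definition term_equiv (n : nat) (u v : term 'I_n) : Prop := tpoly u = tpoly v.

(* ---------- Special product rules ----------
   Six variables x, xdot, y, ydot, z, zdot encoded as 'I_6 (0..5). *)
Definition v6 (k : nat) : term 'I_6 := TVar (inord k).

Definition special (P : prod_rule) : Prop :=
  let x := v6 0 in let dx := v6 1 in let y := v6 2 in
  let dy := v6 3 in let z := v6 4 in let dz := v6 5 in
  [/\ term_equiv (papp P (TAdd x y) (TAdd dx dy) z dz)
                 (TAdd (papp P x dx z dz) (papp P y dy z dz)),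
      term_equiv (papp P x dx (TMul y z) (papp P y dy z dz))
                 (papp P (TMul x y) (papp P x dx y dy) z dz)
    & term_equiv (papp P x dx y dy) (papp P y dy x dx)].

(* Main.v *)
Require Import Defs.
From HB Require Import structures.
From mathcomp Require Import all_boot all_order all_algebra.
From mathcomp Require Import mpoly.
From mathcomp Require Import ring.
From Stdlib Require Import FunctionalExtensionality.
Set Implicit Arguments. Unset Strict Implicit. Unset Printing Implicit Defensive.
Import Order.TTheory GRing.Theory Num.Theory.
Local Open Scope ring_scope.

Section Basic.
Variable S : finType.
Implicit Types f g h : series S.

Definition eqw k f g := forall w : seq S, (size w < k)%N -> f w = g w.

Lemma eqw_refl k f : eqw k f f. Proof. by []. Qed.
Lemma eqw_sym k f g : eqw k f g -> eqw k g f.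
Proof. by move=> H w hw; rewrite H. Qed.
Lemma eqw_trans k f g h : eqw k f g -> eqw k g h -> eqw k f h.
Proof. by move=> H1 H2 w hw; rewrite H1 ?H2. Qed.
Lemma eqw_le k l f g : (l <= k)%N -> eqw k f g -> eqw l f g.
Proof. by move=> hl H w hw; apply: H; apply: leq_trans hl. Qed.

Lemma tsem_eqn (m1 m2 : series S -> series S -> series S) k
  (Hm : forall f f' g g', eqw k f f' -> eqw k g g' -> eqw k (m1 f g) (m2 f' g'))
  (X : Type) (r1 r2 : X -> series S) (Hr : forall i, eqw k (r1 i) (r2 i)) u :
  eqw k (tsem m1 r1 u) (tsem m2 r2 u).
Proof.
elim: u => [x||c u IH|u IHu v IHv|u IHu v IHv] /=.
- exact: Hr.
- by [].

- by move=> w hw; rewrite /sscale IH.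
- by move=> w hw; rewrite /sadd IHu ?IHv.
- exact: Hm.
Qed.

Lemma pval_eqn k f f' g g' a : eqw k.+1 f f' -> eqw k.+1 g g' ->
  forall i, eqw k (pval f g a i) (pval f' g' a i).
Proof.
move=> Hf Hg i w hw; rewrite /pval /sderiv.
case: (nat_of_ord i) => [|[|[|j]]]; [apply: Hf|apply: Hf|apply: Hg|apply: Hg] => //=;
  by apply: leq_trans hw _.
Qed.

Variable P : prod_rule.

Lemma approx_loc n : forall n1 n2 f f' g g', eqw n f f' -> eqw n g g' ->
  (n <= n1)%N -> (n <= n2)%N ->
  eqw n (pprod_approx P n1 f g) (pprod_approx P n2 f' g').
Proof.
elim: n => [|n IH] n1 n2 f f' g g' Hf Hg h1 h2 w //.
case: n1 h1 => // n1 h1; case: n2 h2 => // n2 h2.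
case: w => [|a w] hw /=; first by rewrite Hf ?Hg.
apply: (tsem_eqn (k := n)); last by [].
- by move=> f1 f1' g1 g1' H1 H2; apply: IH.
- exact: pval_eqn.
Qed.

Lemma pprod_eqn k f f' g g' : eqw k f f' -> eqw k g g' ->
  eqw k (pprod P f g) (pprod P f' g').
Proof.
move=> Hf Hg w hw; rewrite /pprod.
by apply: (approx_loc (n := (size w).+1)) => //; apply: eqw_le hw _.
Qed.

Lemma pprod_nil f g : pprod P f g [::] = f [::] * g [::].
Proof. by []. Qed.

Lemma pprod_cons f g a w :
  pprod P f g (a :: w) = tsem (pprod P) (pval f g a) P w.
Proof.
have -> : pprod P f g (a::w) = tsem (pprod_approx P (size w).+1) (pval f g a) P w by [].
apply: (tsem_eqn (k := (size w).+1)) => //.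
move=> f1 f1' g1 g1' H1 H2 v hv; rewrite /pprod.
exact: (approx_loc (eqw_le hv H1) (eqw_le hv H2) hv (leqnn _) (ltnSn _)).
Qed.

Lemma tsem_subst (m : series S -> series S -> series S) (X Y : Type)
  (s : X -> term Y) (rho : Y -> series S) u :
  tsem m rho (tsubst s u) = tsem m (fun x => tsem m rho (s x)) u.
Proof. by elim: u => //= [c u ->|u -> v ->|u -> v ->]. Qed.

Lemma tsem_ext (X : Type) (r1 r2 : X -> series S) :
  (forall i w, r1 i w = r2 i w) -> forall u w, tsem (pprod P) r1 u w = tsem (pprod P) r2 u w.
Proof.
move=> H u w; apply: (tsem_eqn (k := (size w).+1)) => //.
- by move=> f f' g g'; apply: pprod_eqn.
- by move=> i v _; apply: H.
Qed.

Lemma papp_pprod (X : Type) (rho : X -> series S) s1 s2 s3 s4 f g a :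
  (forall w, tsem (pprod P) rho s1 w = f w) ->
  (forall w, tsem (pprod P) rho s2 w = f (a :: w)) ->
  (forall w, tsem (pprod P) rho s3 w = g w) ->
  (forall w, tsem (pprod P) rho s4 w = g (a :: w)) ->
  forall w, tsem (pprod P) rho (papp P s1 s2 s3 s4) w = pprod P f g (a :: w).
Proof.
move=> H1 H2 H3 H4 w; rewrite pprod_cons /papp tsem_subst.
apply: tsem_ext => -[[|[|[|[|i]]]] hi] v //=.
Qed.

Definition rho6 (f1 f2 f3 f4 f5 f6 : series S) : 'I_6 -> series S :=
  fun i => match nat_of_ord i with
    0 => f1 | 1 => f2 | 2 => f3 | 3 => f4 | 4 => f5 | _ => f6 end.

Lemma eps_eval k (rho : 'I_k -> series S) u :
  tsem (pprod P) rho u [::] = (tpoly u).@[fun i => rho i [::]].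
Proof.
elim: u => /= [i||c u IH|u IHu v IHv|u IHu v IHv].
- by rewrite mevalXU.
- by rewrite meval0.
- by rewrite /sscale mevalZ IH.
- by rewrite /sadd mevalD IHu IHv.
- by rewrite pprod_nil mevalM IHu IHv.
Qed.
Lemma enc_inj (D : nat) k (a b : 'I_k -> nat) :
  (forall i, a i < D)%N -> (forall i, b i < D)%N ->
  (\sum_(i < k) a i * D ^ i = \sum_(i < k) b i * D ^ i)%N -> forall i, a i = b i.
Proof.
elim: k a b => [|k IH] a b ha hb E i; first by case: i.
have D0 : (0 < D)%N by apply: leq_ltn_trans (ha ord0).
have split c : (\sum_(i < k.+1) c i * D ^ i =
    c ord0 + D * \sum_(i < k) c (lift ord0 i) * D ^ i)%N.
  rewrite big_ord_recl expn0 muln1; congr (_ + _)%N.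
  rewrite big_distrr /=; apply: eq_bigr => j _.
  by rewrite /bump /= add1n expnS mulnCA.
move: E; rewrite !split => E.
move: E; rewrite !(addnC (_ ord0)) ![(D * _)%N]mulnC => E.
have E0 : a ord0 = b ord0.
  have := congr1 (modn^~ D) E.
  by rewrite !modnMDl !modn_small.
have E1 : (\sum_(i < k) a (lift ord0 i) * D ^ i = \sum_(i < k) b (lift ord0 i) * D ^ i)%N.
  have := congr1 (divn^~ D) E.
  by rewrite !divnMDl // !divn_small // !addn0.
case: (unliftP ord0 i) => [j ->|->] //.
exact: (IH (fun j => a (lift ord0 j)) (fun j => b (lift ord0 j))).
Qed.

Lemma mpoly_vanish k (p : {mpoly rat[k]}) : (forall v, p.@[v] = 0) -> p = 0.
Proof.
move=> Hv.
pose D := msize p.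
have Dbound m i : m \in msupp p -> (m i < D)%N.
  move=> hm; apply: leq_ltn_trans (msize_mdeg_lt hm).
  by rewrite mdegE (bigD1 i) //= leq_addr.
pose enc (m : 'X_{1..k}) := (\sum_(i < k) m i * D ^ i)%N.
pose Q : {poly rat} := \sum_(m <- msupp p) p@_m *: 'X^(enc m).
have HQ t : Q.[t] = p.@[fun i => t ^+ (D ^ i)].
  rewrite mevalE /Q horner_sum; apply: eq_bigr => m _.
  rewrite hornerZ hornerXn; congr (_ * _).
  rewrite /enc (big_morph (fun n => t ^+ n) (exprD t) (expr0 t)).
  by apply: eq_bigr => i _; rewrite -exprM mulnC.
have Q0 : Q = 0.
  apply/eqP; apply/negPn/negP => nzQ.
  have H := max_poly_roots nzQ (rs := [seq (j%:R : rat) | j <- iota 0 (size Q)]).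
  rewrite size_map size_iota ltnn in H; suff : false by []; apply: H.
    by apply/allP => x /mapP [j _ ->]; rewrite /root HQ Hv.
  rewrite map_inj_uniq ?iota_uniq // => x y /eqP; rewrite eqr_nat => /eqP //.
apply/mpolyP => m; rewrite mcoeff0.
have [hm|hm] := boolP (m \in msupp p); last exact: memN_msupp_eq0.
have := congr1 (fun q : {poly rat} => q`_(enc m)) Q0.
rewrite coef0 /Q coef_sum (bigD1_seq m) ?msupp_uniq //= coefZ coefXn eqxx mulr1.
rewrite big1_seq ?addr0 // => m' /andP [ne hm'].
rewrite coefZ coefXn; case: eqP; rewrite ?mulr0 // => E.
have : m' = m.
  apply/mnmP => i; apply: (enc_inj (D := D) (a := fun i => m' i) (b := fun i => m i)).
  all: try (by move=> j; apply: Dbound).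
  exact: (esym E).
by move=> eq; rewrite eq eqxx in ne.
Qed.
Definition mk (r0 r1 : rat) : series S := fun w => if w is _ :: _ then r1 else r0.

Ltac side := let w := fresh "w" in move=> w; rewrite /=; try rewrite /rho6; try rewrite /sadd; try rewrite /sderiv; rewrite ?inordK.

Lemma bac_special (a : S) : BAC (pprod (S:=S) P) -> special P.
Proof.
case=> [Hadd [_ [Hass Hcom]]].
have key : forall L R : term 'I_6,
    (forall r : 'I_6 -> rat, (tpoly L).@[r] = (tpoly R).@[r]) -> term_equiv L R.
  move=> L R H; apply/eqP; rewrite -subr_eq0; apply/eqP/mpoly_vanish => v.
  by rewrite mevalB H subrr.
have Hr : forall r : 'I_6 -> rat, forall u, (tpoly u).@[r] =
  tsem (pprod P) (rho6 (mk (r (inord 0)) (r (inord 1))) (sderiv a (mk (r (inord 0)) (r (inord 1))))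
                      (mk (r (inord 2)) (r (inord 3))) (sderiv a (mk (r (inord 2)) (r (inord 3))))
                      (mk (r (inord 4)) (r (inord 5))) (sderiv a (mk (r (inord 4)) (r (inord 5))))) u [::].
  move=> r u; rewrite eps_eval; apply: meval_eq => -[[|[|[|[|[|[|i]]]]]] hi] //=;
  by congr r; apply: val_inj; rewrite /= inordK.
split; apply: key => r; rewrite !Hr;
  set f := mk _ _; set g := mk _ _; set h := mk _ _.
- rewrite (papp_pprod (f := sadd f g) (g := h) (a := a)); try side => //.
  rewrite Hadd /= /sadd.
  rewrite (papp_pprod (f := f) (g := h) (a := a)); try side => //.
  rewrite (papp_pprod (f := g) (g := h) (a := a)); try side => //.
  by [].
- rewrite (papp_pprod (f := f) (g := pprod P g h) (a := a)); try side => //; last first.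
    by apply: papp_pprod; side.
  rewrite (papp_pprod (f := pprod P f g) (g := h) (a := a)); try side => //; last first.
    by apply: papp_pprod; side.
  by rewrite Hass.
- rewrite (papp_pprod (f := f) (g := g) (a := a)); try side => //.
  rewrite (papp_pprod (f := g) (g := f) (a := a)); try side => //.
  by rewrite Hcom.
Qed.
End Basic.

Lemma Qlin (T : Type) (add : T -> T -> T) (scale : rat -> T -> T) (phi : T -> rat)
  (hadd : forall x y, phi (add x y) = phi x + phi y)
  (hsD : forall a b x, scale (a + b) x = add (scale a x) (scale b x))
  (hs1 : forall x, scale 1 x = x)
  (hsM : forall a b x, scale a (scale b x) = scale (a * b) x) :
  forall c x, phi (scale c x) = c * phi x.
Proof.
have h0 x : phi (scale 0 x) = 0.
  have := hadd (scale 0 x) (scale 0 x); rewrite -hsD addr0 => /eqP.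
  by rewrite -subr_eq0 opprD addrA subrr sub0r oppr_eq0 => /eqP.
have hnat x m : phi (scale m%:R x) = m%:R * phi x.
  elim: m => [|m IH]; first by rewrite h0 mul0r.
  by rewrite -addn1 natrD hsD hadd IH hs1 mulrDl mul1r.
have hneg x a : phi (scale (- a) x) = - phi (scale a x).
  apply/eqP; rewrite -subr_eq0 opprK -hadd -hsD addNr h0 //.
have hint x (z : int) : phi (scale z%:~R x) = z%:~R * phi x.
  case: z => m; first by rewrite hnat.
  by rewrite NegzE mulrNz hneg hnat mulNr.
move=> c x.
have dn : (denq c)%:~R != 0 :> rat by rewrite intr_eq0 denq_neq0.
have E : phi (scale (numq c)%:~R x) = (denq c)%:~R * phi (scale c x).
  rewrite -hint hsM; congr (phi (scale _ x)).
  by rewrite -[X in _ = _ * X](divq_num_den c) mulrC divfK.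
rewrite hint in E.
have -> : phi (scale c x) = (denq c)%:~R^-1 * ((denq c)%:~R * phi (scale c x)).
  by rewrite mulrA mulVf ?mul1r.
rewrite -E mulrA; congr (_ * _).
by rewrite -[c in RHS]divq_num_den mulrC.
Qed.

Section Words.
Variable S : finType.
Fixpoint wl (n : nat) : seq (seq S) :=
  if n is n'.+1 then [::] :: [seq a :: w | a <- enum S, w <- wl n'] else [::].

Lemma mem_wl n w : (w \in wl n) = (size w < n)%N.
Proof.
elim: n w => [|n IH] [|a w] //=; rewrite in_cons //=.
apply/allpairsP/idP => [[[b v] /= [_ hv E]]|hw].
  by case: E => _ ->; rewrite ltnS -IH.
by exists (a, w); rewrite mem_enum IH.
Qed.
End Words.

Section Trunc.
Variables (S : finType) (P : prod_rule) (n : nat).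

Definition Hn :=
  [/\ forall f g h : series S, eqw n (pprod P (sadd f g) h) (sadd (pprod P f h) (pprod P g h)),
      forall f g h : series S, eqw n (pprod P f (pprod P g h)) (pprod P (pprod P f g) h)
    & forall f g : series S, eqw n (pprod P f g) (pprod P g f)].

Definition W := seq_sub (wl S n).
Definition V := {ffun W -> rat^o}.

Definition trunc (f : series S) : V := [ffun x => f (ssval x)].
Definition ext (v : V) : series S :=
  fun w => if insub w is Some x then v x else 0.

Lemma ext_trunc f : eqw n (ext (trunc f)) f.
Proof.
move=> w hw; rewrite /ext.
have hw' : w \in wl S n by rewrite mem_wl.
by case: insubP => [x _ <-|]; rewrite ?ffunE // hw'.
Qed.

Lemma trunc_ext v : trunc (ext v) = v.
Proof. by apply/ffunP => x; rewrite ffunE /ext valK. Qed.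

Lemma trunc_eqn f g : eqw n f g -> trunc f = trunc g.
Proof.
move=> H; apply/ffunP => x; rewrite !ffunE; apply: H.
by rewrite -mem_wl; apply: (valP x).
Qed.

Lemma trunc_eqn_inv f g : trunc f = trunc g -> eqw n f g.
Proof.
move=> H w hw; have hw' : w \in wl S n by rewrite mem_wl.
have := congr1 (fun v : V => v (Sub w hw' : W)) H.
by rewrite !ffunE.
Qed.

Lemma trunc_add f g : trunc (sadd f g) = trunc f + trunc g.
Proof. by apply/ffunP => x; rewrite !ffunE. Qed.
Lemma trunc_scale c f : trunc (sscale c f) = c *: trunc f.
Proof. by apply/ffunP => x; rewrite !ffunE. Qed.
Lemma trunc_zero : trunc (@szero S) = 0.
Proof. by apply/ffunP => x; rewrite !ffunE. Qed.

Lemma ext_add u v : ext (u + v) = sadd (ext u) (ext v).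
Proof.
apply: functional_extensionality => w; rewrite /ext /sadd.
by case: insub => [x|]; rewrite ?ffunE ?addr0.
Qed.
Lemma ext_scale c u : ext (c *: u) = sscale c (ext u).
Proof.
apply: functional_extensionality => w; rewrite /ext /sscale.
by case: insub => [x|]; rewrite ?ffunE ?mulr0.
Qed.

Definition mulV (u v : V) : V := trunc (pprod P (ext u) (ext v)).

Variable H : Hn.

Lemma scale_n c (f g : series S) : eqw n (pprod P (sscale c f) g) (sscale c (pprod P f g)).
Proof.
case: H => Hadd _ _ w hw.
apply: (@Qlin (series S) (@sadd S) (@sscale S) (fun f => pprod P f g w)).
- by move=> x y; rewrite Hadd.
- by move=> a b x; apply: functional_extensionality => v; rewrite /sadd /sscale mulrDl.
- by move=> x; apply: functional_extensionality => v; rewrite /sscale mul1r.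
- by move=> a b x; apply: functional_extensionality => v; rewrite /sscale mulrA.
Qed.

Lemma mulVC u v : mulV u v = mulV v u.
Proof. by case: H => _ _ Hc; apply: trunc_eqn; apply: Hc. Qed.

Lemma mulVA u v w : mulV u (mulV v w) = mulV (mulV u v) w.
Proof.
case: H => _ Ha _; apply: trunc_eqn.
apply: (eqw_trans (g := pprod P (ext u) (pprod P (ext v) (ext w)))).
  by apply: pprod_eqn; [exact: eqw_refl | exact: ext_trunc].
apply: (eqw_trans (Ha _ _ _)).
by apply: pprod_eqn; [apply: eqw_sym; exact: ext_trunc | exact: eqw_refl].
Qed.

Lemma mulVDl u v w : mulV (u + v) w = mulV u w + mulV v w.
Proof.
case: H => Hadd _ _; rewrite /mulV ext_add -trunc_add; apply: trunc_eqn; exact: Hadd.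
Qed.

Lemma mulVZl c u w : mulV (c *: u) w = c *: mulV u w.
Proof.
rewrite /mulV ext_scale -trunc_scale; apply: trunc_eqn; exact: scale_n.
Qed.

Lemma mulVDr u v w : mulV w (u + v) = mulV w u + mulV w v.
Proof. by rewrite !(mulVC w) mulVDl. Qed.
Lemma mulVZr c u w : mulV w (c *: u) = c *: mulV w u.
Proof. by rewrite !(mulVC w) mulVZl. Qed.
Lemma mulV0l w : mulV 0 w = 0.
Proof. by rewrite -(scale0r 0) mulVZl !scale0r. Qed.

Definition A (H' : Hn) := (rat * V)%type.

Lemma ffD (u v : V) x : (u + v) x = u x + v x.
Proof. by rewrite ffunE. Qed.
Lemma ffZ (c : rat) (u : V) x : (c *: u) x = c * u x.
Proof. by rewrite ffunE. Qed.
Lemma ff0 x : (0 : V) x = 0.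
Proof. by rewrite ffunE. Qed.

Lemma scr (b : rat) (x : rat^o) : b *: x = b * x. Proof. by []. Qed.

HB.instance Definition _ := GRing.Zmodule.on (A H).

Definition oneA : A H := (1, 0).
Definition mulU (x y : A H) : A H :=
  (x.1 * y.1, x.1 *: y.2 + y.1 *: x.2 + mulV x.2 y.2).

Lemma mulAA : associative mulU.
Proof.
move=> [a u] [b v] [c w]; rewrite /mulU /=; congr (_, _); first by rewrite mulrA.
rewrite !mulVDl !mulVDr !mulVZl !mulVZr mulVA.
apply/ffunP => i; rewrite !ffD !ffZ; rewrite ?ffunE ?scr; ring.
Qed.

Lemma mulAC : commutative mulU.
Proof.
move=> [a u] [b v]; rewrite /mulU /=; congr (_, _); first by rewrite mulrC.
rewrite mulVC; apply/ffunP => i; rewrite ?ffunE ?scr; ring.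
Qed.

Lemma mul1A : left_id oneA mulU.
Proof.
move=> [a u]; rewrite /mulU /oneA /=; congr (_, _); first by rewrite mul1r.
by rewrite mulV0l scale1r scaler0 !addr0.
Qed.

Lemma mulADl : left_distributive mulU +%R.
Proof.
move=> [a u] [b v] [c w]; rewrite /mulU /=; congr (_, _); first by rewrite mulrDl.
rewrite !mulVDl; apply/ffunP => i; rewrite ?ffunE ?scr; ring.
Qed.

Lemma oneA_neq0 : oneA != 0.
Proof. by rewrite /oneA xpair_eqE oner_eq0. Qed.

HB.instance Definition _ := GRing.Zmodule_isComNzRing.Build (A H) mulAA mulAC mul1A mulADl oneA_neq0.

End Trunc.

Section Eval.
Variables (S : finType) (P : prod_rule) (n : nat) (H : Hn S P n).

Definition phiA (c : rat) : A H := (c, 0).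

Lemma phiA_zmod : zmod_morphism phiA.
Proof. by move=> a b; rewrite /phiA; congr (_, _); rewrite subrr. Qed.

Lemma phiA_monoid : monoid_morphism phiA.
Proof.
split => // a b; rewrite /phiA /GRing.mul /= /mulU /=.
by rewrite (mulV0l H) !scaler0 !addr0.
Qed.

HB.instance Definition _ := GRing.isZmodMorphism.Build rat (A H) phiA phiA_zmod.
HB.instance Definition _ := GRing.isMonoidMorphism.Build rat (A H) phiA phiA_monoid.

Definition emb (f : series S) : A H := (0, trunc n f).

Lemma emb_mul f g : emb (pprod P f g) = emb f * emb g.
Proof.
rewrite /emb /GRing.mul /= /mulU /= mulr0 !scale0r !add0r; congr (_, _).
apply: trunc_eqn; apply: pprod_eqn; apply: eqw_sym; exact: ext_trunc.
Qed.

Lemma sem_mmap k (rho : 'I_k -> series S) u :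
  emb (tsem (pprod P) rho u) = mmap phiA (fun i => emb (rho i)) (tpoly u).
Proof.
elim: u => /= [i||c u IH|u IHu v IHv|u IHu v IHv].
- by rewrite mmapX mmap1U.
- by rewrite mmap0 /emb trunc_zero.
- rewrite mmapZ -IH /emb /phiA trunc_scale /GRing.mul /= /mulU /=.
  congr (_, _); first by rewrite mulr0.
  apply/ffunP => i; rewrite (mulV0l H) !ffunE /=; ring.
- by rewrite mmapD -IHu -IHv /emb trunc_add; congr (_, _); rewrite addr0.
- by rewrite rmorphM /= -IHu -IHv emb_mul.
Qed.

Lemma key k (rho : 'I_k -> series S) u v : tpoly u = tpoly v ->
  eqw n (tsem (pprod P) rho u) (tsem (pprod P) rho v).
Proof.
move=> E; apply: trunc_eqn_inv.
have := sem_mmap rho u; rewrite E -sem_mmap => -[].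
by [].
Qed.
End Eval.

Ltac side2 := let w := fresh "w" in move=> w; rewrite /=; try rewrite /rho6; try rewrite /sadd; try rewrite /sderiv; rewrite ?inordK.

Section Main.
Variables (S : finType) (P : prod_rule).

Lemma step n : special P -> Hn S P n -> Hn S P n.+1.
Proof.
move=> [E1 E2 E3] H; split.
- move=> f g h [|a w] hw; first by rewrite /sadd !pprod_nil mulrDl.
  have hw' : (size w < n)%N by [].
  have K := key H (rho6 f (sderiv a f) g (sderiv a g) h (sderiv a h)) E1 hw'.
  rewrite (papp_pprod (f := sadd f g) (g := h) (a := a)) in K; try (side2 => //).
  rewrite /= /sadd in K.
  rewrite (papp_pprod (f := f) (g := h) (a := a)) in K; try (side2 => //).
  rewrite (papp_pprod (f := g) (g := h) (a := a)) in K; try (side2 => //).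
  exact: K.
- move=> f g h [|a w] hw; first by rewrite !pprod_nil mulrA.
  have hw' : (size w < n)%N by [].
  have K := key H (rho6 f (sderiv a f) g (sderiv a g) h (sderiv a h)) E2 hw'.
  rewrite (papp_pprod (f := f) (g := pprod P g h) (a := a)) in K; try (side2 => //); last first.
    by apply: papp_pprod; side2.
  rewrite (papp_pprod (f := pprod P f g) (g := h) (a := a)) in K; try (side2 => //); last first.
    by apply: papp_pprod; side2.
  exact: K.
- move=> f g [|a w] hw; first by rewrite !pprod_nil mulrC.
  have hw' : (size w < n)%N by [].
  have K := key H (rho6 f (sderiv a f) g (sderiv a g) f (sderiv a f)) E3 hw'.
  rewrite (papp_pprod (f := f) (g := g) (a := a)) in K; try (side2 => //).
  rewrite (papp_pprod (f := g) (g := f) (a := a)) in K; try (side2 => //).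
  exact: K.
Qed.

Lemma special_Hn : special P -> forall n, Hn S P n.
Proof.
move=> sp; elim => [|n IH]; last exact: step.
by split.
Qed.

Lemma special_bac : special P -> BAC (pprod (S:=S) P).
Proof.
move=> sp; have Hall := special_Hn sp.
split; [|split; [|split]].
- move=> f g h; apply: functional_extensionality => w.
  by case: (Hall (size w).+1) => Ha _ _; apply: Ha.
- move=> c f g; apply: functional_extensionality => w.
  exact: (scale_n (Hall (size w).+1)).
- move=> f g h; apply: functional_extensionality => w.
  by case: (Hall (size w).+1) => _ Ha _; apply: Ha.
- move=> f g; apply: functional_extensionality => w.
  by case: (Hall (size w).+1) => _ _ Ha; apply: Ha.
Qed.
End Main.

Local Close Scope ring_scope.
Theorem theorem1 (S : finType) (P : prod_rule) (hS : 0 < #|S|) :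
  BAC (pprod (S:=S) P) <-> special P.
Proof.
split; last exact: special_bac.
by case/card_gt0P: hS => a _; apply: bac_special.
Qed.
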